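(* Let $(X,\rho)$ be a symmetric rack and let $S=\{S_x \mid x\in X\}$ be a family of sets. Suppose that for all $x,y\in X$ we are given maps $\alpha_{x,y}: S_x\times S_y\to S_{x*y}$ and $\beta_x: S_x\to S_{\rho(x)}$; for $t\in S_y$ write $\alpha_{x,y}(t):S_x\to S_{x*y}$ for the map $s\mapsto \alpha_{x,y}(s,t)$. Let $X\times S=\{(x,s)\mid x\in X,\ s\in S_x\}$ with the binary operation $$(x,s)*(y,t)=\big(x*y,\ \alpha_{x,y}(s,t)\big)$$ and the map $\rho_{\alpha,\beta}:X\times S\to X\times S$, $\rho_{\alpha,\beta}(x,s)=\big(\rho(x),\beta_x(s)\big)$. Then $X\times S$ with this operation is a symmetric rack with good involution $\rho_{\alpha,\beta}$ if and only if for all $x,y,z\in X$, $s\in S_x$, $t\in S_y$, $w\in S_z$: (1) $\alpha_{x,y}(t):S_x\to S_{x*y}$ is a bijection; (2) $\alpha_{x*y,z}\big(\alpha_{x,y}(s,t),w\big)=\alpha_{x*z,y*z}\big(\alpha_{x,z}(s,w),\alpha_{y,z}(t,w)\big)$; (3) $\alpha_{\rho(x),y}\big(\beta_x(s),t\big)=\beta_{x*y}\big(\alpha_{x,y}(s,t)\big)$; (4) $\beta_{\rho(x)}\beta_x(s)=s$; (5) $\alpha_{x,\rho(y)}(\beta_y(t))(s)=\big(\alpha_{x*^{-1}y,y}(t)\big)^{-1}(s)$. Furthermore, if $(X,\rho)$ is a symmetric quandle, then $X\times S$ is a symmetric quandle (with this operation and involution) if and only if (1)–(5) hold and additionally (6)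 $\alpha_{x,x}(s,s)=s$ for all $x\in X$, $s\in S_x$.
   Context: A rack is a set $X$ with a binary operation $*$ such that for every $y\in X$ the map $x\mapsto x*y$ is a bijection of $X$ (its inverse is written $x\mapsto x*^{-1}y$) and $(x*y)*z=(x*z)*(y*z)$ for all $x,y,z$. A quandle is a rack with $x*x=x$ for all $x$. A good involution of a rack (quandle) $X$ is a map $\rho:X\to X$ with $\rho^2=\mathrm{id}_X$, $\rho(x*y)=\rho(x)*y$ and $x*\rho(y)=x*^{-1}y$ for all $x,y\in X$; the pair $(X,\rho)$ is then called a symmetric rack (symmetric quandle). *)

(* Defs.v *)
From mathcomp Require Export ssreflect ssrfun ssrbool.

Set Implicit Arguments.
Unset Strict Implicit.

Definition is_rack (T : Type) (op : T -> T -> T) : Prop :=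
  (forall y : T, bijective (fun x => op x y)) /\
  (forall x y z : T, op (op x y) z = op (op x z) (op y z)).

(* rho is a good involution of the rack (T, op).  The condition
   x * rho(y) = x *^{-1} y is written as (x * rho y) * y = x, i.e.
   x * rho y is the (unique) preimage of x under (_ * y). *)
Definition good_involution (T : Type) (op : T -> T -> T) (rho : T -> T) : Prop :=
  (forall x : T, rho (rho x) = x) /\
  (forall x y : T, rho (op x y) = op (rho x) y) /\
  (forall x y : T, op (op x (rho y)) y = x).

Definition symmetric_rack (T : Type) (op : T -> T -> T) (rho : T -> T) : Prop :=
  is_rack op /\ good_involution op rho.

Definition symmetric_quandle (T : Type) (op : T -> T -> T) (rho : T -> T) : Prop :=
  symmetric_rack op rho /\ (forall x : T, op x x = x).

Definition ext_op (X : Type) (S : X -> Type) (op : X -> X -> X)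
  (alpha : forall x y : X, S x -> S y -> S (op x y))
  (p q : {x : X & S x}) : {x : X & S x} :=
  existT S (op (projT1 p) (projT1 q)) (alpha _ _ (projT2 p) (projT2 q)).

Definition ext_rho (X : Type) (S : X -> Type) (rho : X -> X)
  (beta : forall x : X, S x -> S (rho x))
  (p : {x : X & S x}) : {x : X & S x} :=
  existT S (rho (projT1 p)) (beta _ (projT2 p)).

(* Conditions (1)-(5).  Equalities between elements of fibres S_a, S_b with
   a = b only propositionally are stated as equalities in the total space. *)
Definition conditions_1_5 (X : Type) (S : X -> Type) (op opinv : X -> X -> X)
  (rho : X -> X) (alpha : forall x y : X, S x -> S y -> S (op x y))
  (beta : forall x : X, S x -> S (rho x)) : Prop :=
  forall (x y z : X) (s : S x) (t : S y) (w : S z),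
    bijective (fun s' : S x => alpha x y s' t) /\
    existT S _ (alpha _ _ (alpha x y s t) w)
      = existT S _ (alpha _ _ (alpha x z s w) (alpha y z t w)) /\
    existT S _ (alpha _ _ (beta x s) t) = existT S _ (beta _ (alpha x y s t)) /\
    existT S _ (beta _ (beta x s)) = existT S x s /\
    (* (5): alpha_{x,rho y}(beta_y t)(s) = (alpha_{x*^-1 y, y}(t))^{-1}(s),
       i.e. it equals every v with alpha_{x*^-1 y,y}(v,t) = s. *)
    (forall v : S (opinv x y),
        existT S _ (alpha _ _ v t) = existT S x s ->
        existT S _ (alpha x (rho y) s (beta y t)) = existT S _ v).

Definition condition_6 (X : Type) (S : X -> Type) (op : X -> X -> X)
  (alpha : forall x y : X, S x -> S y -> S (op x y)) : Prop :=
  forall (x : X) (s : S x), existT S _ (alpha x x s s) = existT S x s.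

(* Main.v *)
Require Import Defs.
From Stdlib Require Import Eqdep ClassicalEpsilon.

Lemma bij_of (A B : Type) (f : A -> B) :
  (forall a1 a2, f a1 = f a2 -> a1 = a2) -> (forall b, exists a, f a = b) -> bijective f.
Proof.
  intros inj sur.
  exists (fun b => proj1_sig (constructive_indefinite_description _ (sur b))).
  - intro a. apply inj. destruct constructive_indefinite_description; auto.
  - intro b. destruct constructive_indefinite_description; auto.
Qed.

Theorem proposition3p1
  (X : Type) (op opinv : X -> X -> X) (rho : X -> X)
  (Hinv1 : forall x y : X, op (opinv x y) y = x)
  (Hinv2 : forall x y : X, opinv (op x y) y = x)
  (HX : symmetric_rack op rho)
  (S : X -> Type)
  (alpha : forall x y : X, S x -> S y -> S (op x y))
  (beta : forall x : X, S x -> S (rho x)) :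
  (symmetric_rack (ext_op alpha) (ext_rho beta)
     <-> conditions_1_5 opinv alpha beta) /\
  ((forall x : X, op x x = x) ->
     (symmetric_quandle (ext_op alpha) (ext_rho beta)
        <-> conditions_1_5 opinv alpha beta /\ condition_6 alpha)).
Proof.
  destruct HX as [[Xbij Xdist] [Xrr [Xrop Xinvq]]].
  have Hq : forall a b, op (op a b) (rho b) = a.
  { intros a b. transitivity (opinv (op (op (op a b) (rho b)) b) b).
    - by rewrite Hinv2.
    - by rewrite Xinvq Hinv2. }
  have main : symmetric_rack (ext_op alpha) (ext_rho beta)
     <-> conditions_1_5 opinv alpha beta.
  { split.
  + intros [[Hbij Hdist] [Hrr [Hrop Hinvq]]] x y z s t w.
    have injq : forall q p1 p2, ext_op alpha p1 q = ext_op alpha p2 q -> p1 = p2.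
    { intros q p1 p2 e. destruct (Hbij q) as [g g1 g2].
      rewrite -[p1]g1 -[p2]g1. cbv beta. rewrite e. reflexivity. }
    split; [|split; [|split; [|split]]].
    * apply bij_of.
      -- intros s1 s2 e.
         have H := injq (existT S y t) (existT S x s1) (existT S x s2).
         unfold ext_op in H; simpl in H. rewrite e in H.
         exact (inj_pair2 _ _ _ _ _ (H erefl)).
      -- intro u. destruct (Hbij (existT S y t)) as [g g1 g2].
         move: (g2 (existT S (op x y) u)). case: (g _) => x' s'.
         cbv beta. unfold ext_op; simpl. intro e.
         have ex : x' = x.
         { have h := f_equal (@projT1 _ _) e. simpl in h.
           rewrite -(Hinv2 x' y) h Hinv2. reflexivity. }
         subst x'. exists s'. exact (inj_pair2 _ _ _ _ _ e).
    * exact (Hdist (existT S x s) (existT S y t) (existT S z w)).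
    * symmetry. exact (Hrop (existT S x s) (existT S y t)).
    * exact (Hrr (existT S x s)).
    * intros v e.
      have H : ext_op alpha (ext_op alpha (existT S _ v) (existT S y t))
                 (ext_rho beta (existT S y t)) = existT S _ v.
      { apply (injq (existT S y t)). apply Hinvq. }
      change (ext_op alpha (existT S _ v) (existT S y t))
        with (existT S _ (alpha _ _ v t)) in H.
      rewrite e in H. exact H.
  + intros C.
    have surj : forall x y (t : S y) z0 (u : S z0), op x y = z0 ->
        exists s, existT S (op x y) (alpha x y s t) = existT S z0 u.
    { intros x y t z0 u e. subst z0.
      pose s0 : S x := eq_rect _ S (alpha _ _ u (beta y t)) _ (Hq x y).
      destruct (C x y x s0 t s0) as [[g g1 g2] _].
      exists (g u). rewrite g2. reflexivity. }
    split; [split|split; [|split]].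
    * intros [y t]. apply bij_of.
      -- intros [x1 s1] [x2 s2]. unfold ext_op; simpl. intro e.
         have ex : x1 = x2.
         { have h := f_equal (@projT1 _ _) e. simpl in h.
           rewrite -(Hinv2 x1 y) h Hinv2. reflexivity. }
         subst x2. have e' := inj_pair2 _ _ _ _ _ e.
         destruct (C x1 y x1 s1 t s1) as [[g g1 g2] _].
         rewrite -[s1]g1 -[s2]g1 e'. reflexivity.
      -- intros [z u]. destruct (surj (opinv z y) y t z u (Hinv1 z y)) as [s e].
         exists (existT S _ s). exact e.
    * intros [x s] [y t] [z w]. exact (proj1 (proj2 (C x y z s t w))).
    * intros [x s]. exact (proj1 (proj2 (proj2 (proj2 (C x x x s s s))))).
    * intros [x s] [y t]. symmetry. exact (proj1 (proj2 (proj2 (C x y x s t s)))).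
    * intros [x s] [y t].
      destruct (surj (opinv x y) y t x s (Hinv1 x y)) as [v e].
      have H := proj2 (proj2 (proj2 (proj2 (C x y x s t s)))) v e.
      change (ext_op alpha (ext_op alpha (existT S x s) (ext_rho beta (existT S y t)))
                (existT S y t) = existT S x s).
      change (ext_op alpha (existT S x s) (ext_rho beta (existT S y t)))
        with (existT S _ (alpha x (rho y) s (beta y t))).
      rewrite H. exact e. }
  split; first exact main.
  intros _. split.
  - intros [R I]. split; first exact (proj1 main R).
    intros x s. exact (I (existT S x s)).
  - intros [C I]. split; first exact (proj2 main C).
    intros [x s]. exact (I x s).
Qed.
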